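(* Let $(S,\mathcal{T})$ be a configuration with $|S|=k$ and $\mathcal{T}=(T_1,T_2)$, and let $V_1$ be a fixed total order on $C=\{c_1,\ldots,c_m\}$. Then the number of total orders $V_2$ on $C$ such that the election $(C,(V_1,V_2))$ avoids $(S,\mathcal{T})$ equals $S_m(\pi,\pi^{-1})$, where $\pi=p(T_1,T_2)$.
   Context: An election $(C,\mathcal{P})$ is a set $C$ of candidates with a tuple $\mathcal{P}=(V_1,\ldots,V_n)$ of total orders on $C$. A configuration $(S,\mathcal{T})$ is a finite set $S$ with a tuple $\mathcal{T}=(T_1,\ldots,T_l)$ of total orders on $S$. The election contains the configuration if there are injective maps $f:\{1,\ldots,l\}\to\{1,\ldots,n\}$ and $g:S\to C$ such that for all distinct $x,y\in S$ and all $i$, $T_i$ ranking $x$ above $y$ implies $V_{f(i)}$ ranks $g(x)$ above $g(y)$; otherwise it avoids it. For two total orders $T_1,T_2$ on the same $k$-element set, $p(T_1,T_2)$ is the $k$-permutation mapping $i$ to $j$ whenever the $i$-th highest ranked element of $T_1$ is the $j$-th highest ranked element of $T_2$. A $k$-permutation $\pi$ is contained as a pattern in an $m$-permutation $\tau$ if there is a strictly increasing $\mu:\{1,\ldots,k\}\to\{1,\ldots,m\}$ with $(\mu(\pi(1)),\ldots,\mu(\pi(k)))$ a subsequence of $(\tau(1),\ldots,\tau(m))$. $S_m(\pi_1,\ldots,\pi_l)$ denotes the number of $m$-permutations avoiding (not containing) each of the patterns $\pi_1,\ldots,\pi_l$. *)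

(* Defs.v *)
From mathcomp Require Import all_boot all_fingroup.
Set Implicit Arguments. Unset Strict Implicit. Unset Printing Implicit Defensive.

(* A (strict) total order on a finite type T, represented by its graph:
   (x, y) \in R  means  "x is ranked above y". *)
Definition is_torder (T : finType) (R : {set T * T}) : bool :=
  [forall x, (x, x) \notin R] &&
  [forall x, forall y, forall z, ((x, y) \in R) && ((y, z) \in R) ==> ((x, z) \in R)] &&
  [forall x, forall y, (x != y) ==> ((x, y) \in R) || ((y, x) \in R)].

Definition contains (C S : finType) (n l : nat)
    (V : n.-tuple {set C * C}) (T : l.-tuple {set S * S}) : bool :=
  [exists f : {ffun 'I_l -> 'I_n}, injectiveb f &&
    [exists g : {ffun S -> C}, injectiveb g &&
      [forall x, forall y, forall i : 'I_l,
        (x != y) && ((x, y) \in tnth T i) ==> ((g x, g y) \in tnth V (f i))]]].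

Definition avoids (C S : finType) (n l : nat)
    (V : n.-tuple {set C * C}) (T : l.-tuple {set S * S}) : bool :=
  ~~ contains V T.

(* 0-based rank: number of elements ranked above x; x is the (rank+1)-th
   highest ranked element. *)
Definition rank (T : finType) (R : {set T * T}) (x : T) : nat :=
  #|[set y | (y, x) \in R]|.

Definition pcontains (k m : nat) (pi : {perm 'I_k}) (tau : {perm 'I_m}) : bool :=
  [exists mu : {ffun 'I_k -> 'I_m},
    [forall i : 'I_k, forall j : 'I_k, (i < j) ==> (mu i < mu j)] &&
    subseq [seq mu (pi i) | i <- enum 'I_k] [seq tau j | j <- enum 'I_m]].

Definition Savoid (m k : nat) (ps : seq {perm 'I_k}) : nat :=
  #|[set tau : {perm 'I_m} | all (fun p => ~~ pcontains p tau) ps]|.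

(* Main.v *)
Require Import Defs.
From mathcomp Require Import all_boot all_fingroup.
Set Implicit Arguments. Unset Strict Implicit. Unset Printing Implicit Defensive.

Section Tord.
Variables (T : finType) (R : {set T * T}).

Lemma torderP : reflect
  [/\ forall x, (x, x) \notin R,
      forall x y z, (x, y) \in R -> (y, z) \in R -> (x, z) \in R &
      forall x y, x != y -> ((x, y) \in R) || ((y, x) \in R)]
  (is_torder R).
Proof.
apply: (iffP idP).
  case/andP=> /andP[/forallP h1 /forallP h2] /forallP h3; split.
  - exact: h1.
  - by move=> x y z a b; move/forallP: (h2 x) => /(_ y) /forallP /(_ z) /implyP; apply; rewrite a b.
  - by move=> x y; move/forallP: (h3 x) => /(_ y) /implyP.
case=> h1 h2 h3; apply/andP; split; [apply/andP; split|].
- exact/forallP.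
- apply/forallP=> x; apply/forallP=> y; apply/forallP=> z; apply/implyP=> /andP[]; exact: h2.
- apply/forallP=> x; apply/forallP=> y; apply/implyP; exact: h3.
Qed.

Hypothesis hR : is_torder R.

Lemma rank_lt x y : (x, y) \in R -> rank R x < rank R y.
Proof.
case/torderP: hR => h1 h2 _ xy; apply: proper_card; apply/properP; split.
  by apply/subsetP=> z; rewrite !inE => zx; apply: h2 xy.
by exists x; rewrite !inE // (negPf (h1 x)).
Qed.

Lemma rank_ltE x y : ((x, y) \in R) = (rank R x < rank R y).
Proof.
case/torderP: hR => h1 h2 h3.
case xy: ((x, y) \in R); first by rewrite rank_lt.
case: (eqVneq x y) => [->|nxy]; first by rewrite ltnn.
move: (h3 _ _ nxy); rewrite xy /= => /rank_lt yx.
by apply/esym/negP => /(ltn_trans yx); rewrite ltnn.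
Qed.

Lemma rank_inj : injective (rank R).
Proof.
move=> x y e; apply/eqP; apply/negP=> /negP nxy.
case/torderP: hR => _ _ h3; case/orP: (h3 _ _ nxy) => /rank_lt; rewrite e ltnn //.
Qed.

Lemma rank_card x : rank R x < #|T|.
Proof.
case/torderP: hR => h1 _ _; rewrite -cardsT; apply: proper_card; apply/properP; split.
  exact: subsetT.
by exists x; rewrite !inE // (negPf (h1 x)).
Qed.

Definition rk x : 'I_#|T| := Ordinal (rank_card x).

Lemma rk_inj : injective rk.
Proof. by move=> x y /(congr1 val) /= /rank_inj. Qed.

Lemma rk_bij : bijective rk.
Proof. by apply: inj_card_bij; [exact: rk_inj|rewrite card_ord]. Qed.

Lemma rk_ltE x y : ((x, y) \in R) = (rk x < rk y).
Proof. exact: rank_ltE. Qed.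

End Tord.
Definition oltn n := fun x y : 'I_n => x < y.

Lemma sorted_enum_ord n : sorted (@oltn n) (enum 'I_n).
Proof. by have := iota_ltn_sorted 0 n; rewrite -val_enum_ord sorted_map. Qed.

Lemma oltn_trans n : transitive (@oltn n).
Proof. move=> y x z; exact: ltn_trans. Qed.

Lemma oltn_irr n : irreflexive (@oltn n).
Proof. move=> x; exact: ltnn. Qed.

Lemma subseq_mono k m (a : 'I_k -> 'I_m) :
  (forall i j : 'I_k, i < j -> a i < a j) <-> subseq [seq a i | i <- enum 'I_k] (enum 'I_m).
Proof.
split=> [mono | ss].
  have so : sorted (@oltn m) [seq a i | i <- enum 'I_k].
    rewrite sorted_map; apply: sub_sorted (sorted_enum_ord k) => x y; exact: mono.
  apply/subseq_uniqP; first exact: enum_uniq.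
  apply: (irr_sorted_eq (@oltn_trans m) (@oltn_irr m)) => //.
    apply: sorted_filter; [exact: oltn_trans | exact: sorted_enum_ord].
  by move=> x; rewrite mem_filter mem_enum andbT.
have so : sorted (@oltn m) [seq a i | i <- enum 'I_k].
  apply: subseq_sorted ss _; [exact: oltn_trans | exact: sorted_enum_ord].
move: so; rewrite sorted_map => so i j ij.
have tr : transitive (relpre a (@oltn m)).
  by move=> y x z; rewrite /relpre; apply: oltn_trans.
have := sorted_ltn_nth tr i so.
rewrite size_enum_ord => /(_ i j); rewrite !inE !ltn_ord !nth_ord_enum; exact.
Qed.
Lemma mono_ge n (h : 'I_n -> 'I_n) : (forall i j : 'I_n, i < j -> h i < h j) ->
  forall i : 'I_n, i <= h i.
Proof.
move=> mono i; suff: forall p (i : 'I_n), val i = p -> p <= h i by apply.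
clear i; elim=> [|p IH] i e //.
have lt : p < n by apply: ltn_trans (ltn_ord i); rewrite e.
have := mono (Ordinal lt) i; rewrite e ltnSn => /(_ isT).
by apply: leq_ltn_trans; apply: IH.
Qed.

Lemma mono_perm_id n (h : {perm 'I_n}) : (forall i j : 'I_n, i < j -> h i < h j) ->
  forall i, h i = i.
Proof.
move=> mono i.
have monoV : forall a b : 'I_n, a < b -> (h^-1)%g a < (h^-1)%g b.
  move=> a b ab; rewrite ltnNge leq_eqVlt; apply/negP => /orP[/eqP e|].
    by move: ab; rewrite -(permKV h a) -(permKV h b) (val_inj e) ltnn.
  by move/mono; rewrite !permKV => /(ltn_trans ab); rewrite ltnn.
apply/val_inj/eqP; rewrite eqn_leq (mono_ge mono) andbT.
by have := mono_ge monoV (h i); rewrite permK.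
Qed.

Definition embb (S C : finType) (A : {set S * S}) (P : {set C * C}) (g : S -> C) :=
  [forall x, forall y, (x != y) && ((x, y) \in A) ==> ((g x, g y) \in P)].

Lemma embbP (S C : finType) (A : {set S * S}) (P : {set C * C}) (g : S -> C) :
  reflect (forall x y, x != y -> (x, y) \in A -> (g x, g y) \in P) (embb A P g).
Proof.
apply: (iffP idP).
  by move=> /forallP h x y nxy xy; move/forallP: (h x) => /(_ y) /implyP; apply; rewrite nxy.
by move=> h; apply/forallP=> x; apply/forallP=> y; apply/implyP=> /andP[]; apply: h.
Qed.

Lemma mono_inj k m (a : 'I_k -> 'I_m) : (forall i j : 'I_k, i < j -> a i < a j) -> injective a.
Proof.
move=> mono i j e; case: (ltngtP i j) => [/mono|/mono|/val_inj //]; by rewrite e ltnn.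
Qed.

Section Core.
Variables (S C : finType) (A B : {set S * S}) (P Q : {set C * C}).
Hypotheses (hA : is_torder A) (hP : is_torder P).
Variables (sigma : {perm 'I_#|S|}) (tau : {perm 'I_#|C|}).
Hypothesis hB : forall x y, ((x, y) \in B) = (sigma (rk hA x) < sigma (rk hA y)).
Hypothesis hQ : forall x y, ((x, y) \in Q) = (tau (rk hP x) < tau (rk hP y)).

Lemma core : [exists g : {ffun S -> C}, injectiveb g && (embb A P g && embb B Q g)]
  = pcontains sigma tau.
Proof.
have [eA rkA eAK] := rk_bij hA.
have [eP rkP ePK] := rk_bij hP.
apply/idP/idP.
  case/existsP=> g /and3P[/injectiveP ginj /embbP gA /embbP gB].
  pose a i := rk hP (g (eA i)).
  have amono : forall i j : 'I_#|S|, i < j -> a i < a j.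
    move=> i j ij; rewrite /a -rk_ltE; apply: gA.
      by apply/eqP => /(can_inj eAK) e; move: ij; rewrite e ltnn.
    by rewrite rk_ltE !eAK.
  apply/existsP; exists [ffun j => tau (a ((sigma^-1)%g j))]; apply/andP; split.
    apply/forallP=> i; apply/forallP=> j; apply/implyP=> ij; rewrite !ffunE.
    rewrite /a; set x := eA ((sigma^-1)%g i); set y := eA ((sigma^-1)%g j).
    have xy : (x, y) \in B by rewrite hB /x /y !eAK !permKV.
    rewrite -hQ; apply: gB => //.
    by apply/eqP => e; move: xy; rewrite e hB ltnn.
  have -> : [seq [ffun j => tau (a ((sigma^-1)%g j))] (sigma i) | i <- enum 'I_#|S|]
          = [seq tau j | j <- [seq a i | i <- enum 'I_#|S|]].
    by rewrite -[RHS]map_comp; apply: eq_map => i; rewrite /= ffunE permK.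
  by apply: map_subseq; apply/subseq_mono.
case/existsP=> mu /andP[/forallP mmono ss].
have mmono' : forall i j : 'I_#|S|, i < j -> mu i < mu j.
  by move=> i j ij; move/forallP: (mmono i) => /(_ j) /implyP; apply.
pose a i := (tau^-1)%g (mu (sigma i)).
have amono : forall i j : 'I_#|S|, i < j -> a i < a j.
  apply/subseq_mono.
  have e : forall s : seq 'I_#|C|, [seq ((tau^-1)%g \o [eta tau]) i | i <- s] = s.
    by elim=> //= j s ->; rewrite permK.
  by have := map_subseq (tau^-1)%g ss; rewrite -[X in subseq _ X]map_comp -[X in subseq X _]map_comp e.
apply/existsP; exists [ffun x => eP (a (rk hA x))].
apply/and3P; split.
- apply/injectiveP=> x y; rewrite !ffunE => /(can_inj ePK) /(mono_inj amono).
  exact: rk_inj.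
- apply/embbP=> x y _; rewrite !ffunE rk_ltE rk_ltE !ePK; exact: amono.
- apply/embbP=> x y _; rewrite !ffunE hB hQ !ePK /a !permKV; exact: mmono'.
Qed.

End Core.
Lemma ord2_cases (j : 'I_2) : j = ord0 \/ j = ord_max.
Proof. by case: j => [[|[|//]]] p; [left|right]; apply: val_inj. Qed.

Lemma contains2 (S C : finType) (V1 V2 : {set C * C}) (T1 T2 : {set S * S}) :
  contains [tuple V1; V2] [tuple T1; T2] =
  [exists g : {ffun S -> C}, injectiveb g && (embb T1 V1 g && embb T2 V2 g)] ||
  [exists g : {ffun S -> C}, injectiveb g && (embb T2 V1 g && embb T1 V2 g)].
Proof.
apply/idP/idP.
  case/existsP=> f /andP[/injectiveP finj /existsP[g /andP[gi /forallP H]]].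
  have H' : forall i x y, x != y -> (x, y) \in tnth [tuple T1; T2] i ->
      (g x, g y) \in tnth [tuple V1; V2] (f i).
    move=> i x y nxy xy; move/forallP: (H x) => /(_ y) /forallP /(_ i) /implyP; apply.
    by rewrite nxy xy.
  have n01 : f ord0 != f ord_max by apply/eqP => /finj.
  case: (ord2_cases (f ord0)) => e0; rewrite e0 in n01;
    case: (ord2_cases (f ord_max)) => e1; rewrite e1 in n01 => //.
    apply/orP; left; apply/existsP; exists g; rewrite gi /=.
    by apply/andP; split; apply/embbP => x y nxy xy;
      [have := H' ord0 x y nxy xy; rewrite e0 | have := H' ord_max x y nxy xy; rewrite e1].
  apply/orP; right; apply/existsP; exists g; rewrite gi /=.
  by apply/andP; split; apply/embbP => x y nxy xy;
    [have := H' ord_max x y nxy xy; rewrite e1 | have := H' ord0 x y nxy xy; rewrite e0].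
case/orP=> /existsP[g /andP[gi /andP[/embbP g1 /embbP g2]]].
  apply/existsP; exists [ffun i => i]; apply/andP; split.
    by apply/injectiveP=> i j; rewrite !ffunE.
  apply/existsP; exists g; rewrite gi /=.
  apply/forallP=> x; apply/forallP=> y; apply/forallP=> i; apply/implyP=> /andP[nxy].
  rewrite ffunE; case: (ord2_cases i) => ->; [exact: g1| exact: g2].
apply/existsP; exists [ffun i : 'I_2 => if i == ord0 then ord_max else ord0]; apply/andP; split.
  apply/injectiveP=> i j; rewrite !ffunE.
  by case: (ord2_cases i) => ->; case: (ord2_cases j) => ->.
apply/existsP; exists g; rewrite gi /=.
apply/forallP=> x; apply/forallP=> y; apply/forallP=> i; apply/implyP=> /andP[nxy].
rewrite ffunE; case: (ord2_cases i) => ->; [exact: g2| exact: g1].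
Qed.
Theorem mainTheorem3 (S C : finType) (k m : nat)
    (T1 T2 : {set S * S}) (V1 : {set C * C})
    (hS : #|S| = k) (hC : #|C| = m)
    (hT1 : is_torder T1) (hT2 : is_torder T2) (hV1 : is_torder V1)
    (pi : {perm 'I_k})
    (hpi : forall (x : S) (i : 'I_k),
        nat_of_ord i = rank T1 x -> nat_of_ord (pi i) = rank T2 x) :
  #|[set V2 : {set C * C} | is_torder V2 && avoids [tuple V1; V2] [tuple T1; T2]]|
  = Savoid m [:: pi; pi^-1]%g.
Proof.
subst k m.
have [e1 r1K e1K] := rk_bij hV1.
pose F (tau : {perm 'I_#|C|}) := [set p : C * C | tau (rk hV1 p.1) < tau (rk hV1 p.2)].
pose B := [set tau : {perm 'I_#|C|} | all (fun p => ~~ pcontains p tau) [:: pi; pi^-1]%g].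
have hpi' : forall x, pi (rk hT1 x) = rk hT2 x.
  by move=> x; apply: val_inj; apply: hpi.
have hB1 : forall x y, ((x, y) \in T2) = (pi (rk hT1 x) < pi (rk hT1 y)).
  by move=> x y; rewrite !hpi' rk_ltE.
have hB2 : forall x y, ((x, y) \in T1) = ((pi^-1)%g (rk hT2 x) < (pi^-1)%g (rk hT2 y)).
  by move=> x y; rewrite -!hpi' !permK rk_ltE.
have Key : forall tau, avoids [tuple V1; F tau] [tuple T1; T2] = (tau \in B).
  move=> tau.
  have hQ : forall x y, ((x, y) \in F tau) = (tau (rk hV1 x) < tau (rk hV1 y)).
    by move=> x y; rewrite inE.
  by rewrite /avoids contains2 (core hB1 hQ) (core hB2 hQ) inE /= andbT negb_or.
have torderF : forall tau, is_torder (F tau).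
  move=> tau; apply/torderP; split.
  - by move=> x; rewrite inE ltnn.
  - by move=> x y z; rewrite !inE; apply: ltn_trans.
  - move=> x y nxy; rewrite !inE /=; case: ltngtP => // e.
    by move: nxy; rewrite (rk_inj (perm_inj (val_inj e))) eqxx.
have Finj : injective F.
  move=> tau tau' eF.
  have hmono : forall a b, tau a < tau b -> tau' a < tau' b.
    move=> a b; have := congr1 (fun X : {set C * C} => (e1 a, e1 b) \in X) eF.
    by rewrite /= !inE /= !e1K => ->.
  have hid := @mono_perm_id _ (tau^-1 * tau')%g.
  apply/permP => a.
  have := hid _ (tau a); rewrite permM permK => -> //.
  by move=> c d cd; rewrite !permM; apply: hmono; rewrite !permKV.
have -> : [set V2 : {set C * C} | is_torder V2 && avoids [tuple V1; V2] [tuple T1; T2]]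
        = F @: B.
  apply/setP => V2; rewrite inE; apply/idP/imsetP.
    case/andP => hV2 av.
    have tinj : injective (fun a => rk hV2 (e1 a)).
      by move=> a b /rk_inj /(can_inj e1K).
    have eV : F (perm tinj) = V2.
      by apply/setP => -[x y]; rewrite inE /= !permE !r1K rk_ltE.
    by exists (perm tinj) => //; rewrite -Key eV.
  by case => tau tB ->; rewrite torderF Key.
by rewrite card_imset.
Qed.
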